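(* For $n\ge0$ let $\mathcal{G}_n$ be the set of words $w=w_1\cdots w_{2n}$ over $\{0,1\}$ consisting of $n$ zeros and $n$ ones, and let $\mathrm{da}(w)=|\{i\in[n]: w_i\neq w_{2n+1-i}\}|$. Then $$\sum_{n\ge0}\sum_{w\in\mathcal{G}_n} t^{\mathrm{da}(w)}x^n=\frac{1}{\sqrt{1-4tx+4(t^2-1)x^2}}.$$
   Context: $[n]=\{1,2,\dots,n\}$. *)

(* Defs.v *)
(* Formal power series in x with coefficients in Z[t]
   represented by their coefficient sequences nat -> {poly int}. *)
From mathcomp Require Import all_boot all_order all_algebra.
Set Implicit Arguments. Unset Strict Implicit. Unset Printing Implicit Defensive.
Import Order.TTheory GRing.Theory Num.Theory.
Local Open Scope ring_scope.

Definition Gset (n : nat) : {set (n.*2).-tuple bool} :=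
  [set w : (n.*2).-tuple bool | count id w == n].

(* da(w) = #{ i in [n] : w_i <> w_{2n+1-i} }, written with 0-based indices:
   position i (0 <= i < n) is compared with position 2n-1-i. *)
Definition da (n : nat) (w : (n.*2).-tuple bool) : nat :=
  #|[set i : 'I_n | nth false w i != nth false w (n.*2 - 1 - i)%N]|.

(* coefficient of x^n of the left-hand side, a polynomial in t = 'X *)
Definition Pcoef (n : nat) : {poly int} :=
  \sum_(w in Gset n) 'X^(da w).

Definition conv (a b : nat -> {poly int}) (n : nat) : {poly int} :=
  \sum_(i < n.+1) a i * b (n - i)%N.

Definition Qcoef (n : nat) : {poly int} :=
  match n with
  | 0 => 1
  | 1 => - 4%:R * 'X
  | 2 => 4%:R * ('X ^+ 2 - 1)
  | _ => 0
  end.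

(* Main.v *)
Require Import Defs.
From mathcomp Require Import all_boot all_order all_algebra.
From mathcomp Require Import zify ring.
Import GRing.Theory Num.Theory.
Local Open Scope ring_scope.

Definition cc : {poly int} := 'X *+ 2.
Definition Phi : {poly {poly int}} := 1 + cc%:P * 'X + 'X^2.
Definition T n j := (Phi ^+ n)`_j.

Definition pr n (w : (n.*2).-tuple bool) : {ffun 'I_n -> bool * bool} :=
  [ffun i : 'I_n => (nth false w i, nth false w (n.*2 - 1 - i)%N)].

Lemma pr_inj n : injective (@pr n).
Proof.
move=> w1 w2 e; apply: val_inj; apply: (@eq_from_nth _ false); first by rewrite !size_tuple.
move=> k; rewrite size_tuple => Hk.
case: (ltnP k n) => Hkn.
  have := congr1 (fun F : {ffun _ -> _} => (F (Ordinal Hkn)).1) e; by rewrite !ffunE.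
have Hi : (n.*2 - 1 - k < n)%N by lia.
have := congr1 (fun F : {ffun _ -> _} => (F (Ordinal Hi)).2) e; rewrite !ffunE /=.
by have -> : (n.*2 - 1 - (n.*2 - 1 - k) = k)%N by lia.
Qed.

Lemma pr_bij n : bijective (@pr n).
Proof.
apply: inj_card_bij; first exact: pr_inj.
by rewrite card_ffun card_prod card_bool card_ord card_tuple card_bool -mul2n expnM.
Qed.

Definition f (p : bool * bool) : {poly {poly int}} :=
  ('X^(p.1 != p.2))%:P * 'X^(p.1 + p.2).

Lemma sumf : \sum_p f p = Phi.
Proof.
rewrite -(pair_bigA _ (fun a b => f (a, b))) /= !big_bool /= /f /= /Phi /cc.
rewrite !expr0 !expr1 polyCMn; ring.
Qed.

Lemma da_sum n (w : (n.*2).-tuple bool) :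
  da w = (\sum_(i < n) (nth false w i != nth false w (n.*2 - 1 - i)%N))%N.
Proof.
rewrite /da cardsE -sum1_card big_mkcond /=; apply: eq_bigr => i _.
by rewrite unfold_in; case: (_ != _).
Qed.

Lemma count_sum n (w : (n.*2).-tuple bool) :
  count id w = (\sum_(i < n) (nth false w i + nth false w (n.*2 - 1 - i)%N))%N.
Proof.
rewrite -sum1_count (big_nth false) size_tuple big_mkcond /=.
rewrite (big_cat_nat _ (n := n)) /=; [|lia|lia].
rewrite big_split /= big_mkord; congr (_ + _)%N.
rewrite big_nat_rev /= -{1}(add0n n) big_addn big_mkord.
have -> : (n.*2 - n = n)%N by lia.
apply: eq_bigr => i _.
have -> : (n + n.*2 - (i + n).+1 = n.*2 - 1 - i)%N by lia.
by case: (nth _ _ _).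
Qed.

Lemma Pcoef_T n : Pcoef n = T n n.
Proof.
have E : Phi ^+ n = \sum_(w : (n.*2).-tuple bool) ('X^(da w))%:P * 'X^(count id w).
  rewrite -sumf.
  have -> : (\sum_p f p) ^+ n = \prod_(i < n) \sum_p f p by rewrite prodr_const card_ord.
  rewrite bigA_distr_bigA /=.
  rewrite (reindex (@pr n)) /=; last exact: onW_bij (pr_bij n).
  apply: eq_bigr => w _.
  rewrite /f big_split /= -rmorph_prod /= !prodrXr da_sum count_sum.
  by congr (_%:P * _); [congr ('X ^+ _)|congr ('X ^+ _)]; apply: eq_bigr => i _; rewrite ffunE.
rewrite /T E coef_sum /Pcoef /Gset big_mkcond /=; apply: eq_bigr => w _.
by rewrite inE coefCM coefXn eq_sym; case: (_ == _); rewrite ?mulr1 ?mulr0.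
Qed.

Lemma TS n j : T n.+1 j =
  T n j + (if j is j'.+1 then T n j' * cc else 0) + (if j is j'.+2 then T n j' else 0).
Proof.
rewrite /T exprSr.
have -> : Phi ^+ n * Phi = Phi ^+ n + (Phi ^+ n * cc%:P) * 'X + Phi ^+ n * 'X^2.
  move: (Phi ^+ n) => P; by rewrite /Phi !mulrDr mulr1 mulrA.
by rewrite !coefD coefMX coefMC coefMXn; case: j => [|[|j]] //=; rewrite ?addr0 // subn2.
Qed.

Lemma dPhi : Phi^`() = cc%:P + 'X *+ 2.
Proof. rewrite /Phi !derivE /= add0r mulr1 mul1r mulr1 mulr2n; done. Qed.

Lemma ode n : Phi * (Phi ^+ n)^`() = (Phi^`() * Phi ^+ n) *+ n.
Proof.
case: n => [|n]; first by rewrite expr0 mulr0n -polyC1 derivC mulr0.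
rewrite deriv_exp /= mulrnAr exprS; congr (_ *+ _).
move: (Phi ^+ n) (Phi^`()) => P D; rewrite mulrCA mulrA; done.
Qed.

Lemma TC n j : j.+2%:R * T n j.+2 + cc * j.+1%:R * T n j.+1 + j%:R * T n j
  = n%:R * (cc * T n j.+1 + 2%:R * T n j).
Proof.
have := congr1 (fun p : {poly {poly int}} => p`_j.+1) (ode n).
have -> : Phi * (Phi ^+ n)^`() = (Phi ^+ n)^`() + ((Phi ^+ n)^`() * cc%:P) * 'X
   + (Phi ^+ n)^`() * 'X^2 by move: ((Phi ^+ n)^`()) => D; rewrite /Phi; ring.
rewrite dPhi.
have -> : (cc%:P + 'X *+ 2) * Phi ^+ n = Phi ^+ n * cc%:P + (Phi ^+ n * 'X) *+ 2 by move: (Phi ^+ n) => P; ring.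
rewrite /= !coefD coefMX coefMC coefMXn !coefMn coefD coefMC coefMn coefMX /=.
rewrite !coef_deriv /T.
move: (Phi ^+ n) => P.
case: j => [|j] /=.
  move: (P`_2) (P`_1) (P`_0) => x y z.
  move=> H; transitivity ((y * cc + z *+ 2) *+ n); last by ring.
  rewrite -H; ring.
rewrite subn2 /=.
move: (P`_j.+3) (P`_j.+2) (P`_j.+1) => x y z.
move=> H; transitivity ((y * cc + z *+ 2) *+ n); last by ring.
rewrite -H; ring.
Qed.

Lemma T0 j : T 0 j = (j == 0)%:R.
Proof. by rewrite /T expr0 coef1. Qed.

Lemma Rrec m : m.+2%:R * T m.+2 m.+2 =
  cc * (2 * m + 3)%:R * T m.+1 m.+1 + m.+1%:R * (4%:R - cc ^+ 2) * T m m.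
Proof.
case: m => [|[|l]].
- rewrite !TS /= !T0 /=. ring.
- rewrite !TS /= !T0 /=; ring.
have H1 := TC l.+3 l.+2.
have H2 := TS l.+3 l.+4.
have H3 := TS l.+2 l.+2.
have H4 := TC l.+2 l.
have H5 := TC l.+2 l.+1.
have H6 := TS l.+2 l.+3.
simpl in H2, H3, H6.
move: H1 H2 H3 H4 H5 H6.
move: (T l.+4 l.+4) (T l.+3 l.+4) (T l.+3 l.+3) (T l.+3 l.+2) (T l.+2 l.+3)
  (T l.+2 l.+2) (T l.+2 l.+1) (T l.+2 l) => a4 x34 a3 x32 x23 a2 x21 x20.
move=> H1 H2 H3 H4 H5 H6.
apply/eqP; rewrite -subr_eq0; apply/eqP.
transitivity (
  l.+4%:R * (a4 - (x34 + a3 * cc + x32))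
  + ((l.+4%:R * x34 + cc * l.+3%:R * a3 + l.+2%:R * x32) - l.+3%:R * (cc * a3 + 2%:R * x32))
  + 2%:R * l.+4%:R * (x32 - (a2 + x21*cc + x20))
  - 2%:R * ((l.+2%:R * a2 + cc * l.+1%:R * x21 + l%:R * x20) - l.+2%:R * (cc * x21 + 2%:R * x20))
  - cc * ((l.+3%:R * x23 + cc * l.+2%:R * a2 + l.+1%:R * x21) - l.+2%:R * (cc*a2 + 2%:R*x21))
  - cc * l.+3%:R * (a3 - (x23 + a2*cc + x21))); first ring.
rewrite H1 H4 H5 H2 H3 H6; ring.
Qed.

Definition q1 : {poly int} := - 4%:R * 'X.
Definition q2 : {poly int} := 4%:R * ('X ^+ 2 - 1).
Definition Qp : {poly {poly int}} := 1 + q1%:P * 'X + q2%:P * 'X^2.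

Lemma Qp_coef k : Qp`_k = Qcoef k.
Proof.
rewrite /Qp !coefD coefC !coefCM coefX coefXn.
by case: k => [|[|[|k]]] /=; rewrite ?mulr0 ?mulr1 ?addr0 ?add0r.
Qed.

Lemma coefMQ (p : {poly {poly int}}) j : (p * Qp)`_j =
  p`_j + (if j is j'.+1 then p`_j' * q1 else 0) + (if j is j'.+2 then p`_j' * q2 else 0).
Proof.
have -> : p * Qp = p + (p * q1%:P) * 'X + (p * q2%:P) * 'X^2 by rewrite /Qp; ring.
rewrite !coefD coefMX !coefMC coefMXn; case: j => [|[|j]] //=; by rewrite subn2 coefMC.
Qed.

Lemma coefMdQ (p : {poly {poly int}}) j : (p * Qp^`())`_j =
  p`_j * q1 + (if j is j'.+1 then p`_j' * (q2 *+ 2) else 0).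
Proof.
have -> : Qp^`() = q1%:P + (q2%:P * 'X) *+ 2 by rewrite /Qp !derivE /=; ring.
have -> : p * (q1%:P + (q2%:P * 'X) *+ 2) = p * q1%:P + ((p * q2%:P) * 'X) *+ 2 by ring.
rewrite coefD coefMC coefMn coefMX coefMC; case: j => [|j] /=; first by rewrite mul0rn.
by rewrite mulrnAr.
Qed.

Lemma natmul0 (x : {poly int}) k : x *+ k.+1 = 0 -> x = 0.
Proof.
move=> H; apply/polyP => i; have := congr1 (fun p : {poly int} => p`_i) H.
by rewrite coefMn coef0 => /eqP; rewrite mulrn_eq0 /= => /eqP.
Qed.

Lemma natmul0' (x : {poly {poly int}}) k : x *+ k.+1 = 0 -> x = 0.
Proof.
move=> H; apply/polyP => i; have := congr1 (fun p : {poly {poly int}} => p`_i) H.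
by rewrite coefMn coef0 => /natmul0.
Qed.

Lemma T00 : T 0 0 = 1. Proof. by rewrite T0. Qed.
Lemma T11 : T 1 1 = cc. Proof. rewrite TS /= !T0 /=; ring. Qed.

Section Main.
Variable n : nat.
Let A : {poly {poly int}} := \poly_(i < n.+1) T i i.

Lemma Acoef i : (i <= n)%N -> A`_i = T i i.
Proof. by move=> H; rewrite coef_poly ltnS H. Qed.

Let E := (A^`() * Qp) *+ 2 + A * Qp^`().

Lemma Ecoef j : (j < n)%N -> E`_j = 0.
Proof.
move=> Hj; rewrite /E coefD coefMn coefMQ coefMdQ.
case: j Hj => [|[|k]] Hk; rewrite !coef_deriv !Acoef; try lia.
- rewrite T11 T00 /q1 /cc; ring.
- have := Rrec 0; rewrite T11 T00; move: (T 2 2) => x H.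
  transitivity (2%:R * (2%:R * x - (cc * (2*0+3)%:R * cc + 1%:R * (4%:R - cc ^+ 2) * 1))).
    rewrite /q1 /q2 /cc; ring.
  by rewrite H subrr mulr0.
- have := Rrec k.+1; move: (T k.+3 k.+3) (T k.+2 k.+2) (T k.+1 k.+1) => x y z H.
  transitivity (2%:R * (k.+3%:R * x - (cc * (2*k.+1+3)%:R * y + k.+2%:R * (4%:R - cc ^+ 2) * z))).
    rewrite /q1 /q2 /cc; ring.
  by rewrite H subrr mulr0.
Qed.

Lemma AAQ_coef j : (j < n)%N -> (A * A * Qp)`_j.+1 = 0.
Proof.
move=> Hj.
have D : (A * A * Qp)^`() = A * E.
  rewrite /E !derivM; move: (A^`()) (Qp^`()) => a q; ring.
apply: (@natmul0 _ j); rewrite -coef_deriv D coefM.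
apply: big1 => i _; rewrite Ecoef ?mulr0 //.
have := ltn_ord i; lia.
Qed.

Lemma AAQ0 : (A * A * Qp)`_0 = 1.
Proof. by rewrite coefMQ coefM big_ord1 !Acoef // T00 mulr1 !addr0. Qed.

Lemma conv_AAQ : conv (conv Pcoef Pcoef) Qcoef n = (A * A * Qp)`_n.
Proof.
rewrite /conv coefM; apply: eq_bigr => i _.
rewrite Qp_coef coefM; congr (_ * _); apply: eq_bigr => k _.
have Hi := ltn_ord i; have Hk := ltn_ord k.
rewrite !Acoef ?Pcoef_T //; lia.
Qed.
End Main.

Theorem theorem3p1 :
  Pcoef 0 = 1 /\
  forall n : nat, conv (conv Pcoef Pcoef) Qcoef n = (n == 0%N)%:R.
Proof.
split; first by rewrite Pcoef_T T00.
move=> n; rewrite conv_AAQ.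
case: n => [|n]; first by rewrite AAQ0.
by rewrite AAQ_coef.
Qed.
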